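(* Let $\mathbb{F}_q$ be a finite field, $\mathbb{P}$ a poset on $[n]=\{1,\dots,n\}$, and let $\mathcal{C}\subseteq\mathbb{F}_q^n$ be a linear MDS $\mathbb{P}$-code with parameters $[n,k,d=n-k+1]$, i.e. a linear $[n,k]$ code with $d=d_1^{\mathbb{P}}(\mathcal{C})=n-k+1$. Then, for every $r$ with $d\le r\le n$, $$\mathcal{A}_{r,\mathbb{P}}(\mathcal{C})=\sum_{I\in\Lambda^r(\mathbb{P})}\ \sum_{s=0}^{r-d}(-1)^s\binom{|M(I)|}{s}\left(q^{r-d+1-s}-1\right).$$
   Context: A subset $I\subseteq[n]$ is an ideal of $\mathbb{P}$ if $j\in I$ and $i\le_{\mathbb{P}}j$ imply $i\in I$. $\Lambda^r(\mathbb{P})$ is the set of ideals of $\mathbb{P}$ of size $r$, and $M(I)$ is the set of maximal elements (with respect to $\le_{\mathbb{P}}$) of $I$. For $u\in\mathbb{F}_q^n$, $\mathrm{supp}(u)=\{i:u_i\ne0\}$ and the $\mathbb{P}$-weight is $w_{\mathbb{P}}(u)=|\{i:i\le_{\mathbb{P}}j\text{ for some }j\in\mathrm{supp}(u)\}|$; for a subspace $D$, $w_{\mathbb{P}}(D)$ is the size of the smallest ideal containing $\bigcup_{u\in D}\mathrm{supp}(u)$. $d_1^{\mathbb{P}}(\mathcal{C})=\min\{w_{\mathbb{P}}(D): D \text{ a 1-dimensional subspace of }\mathcal{C}\}$ (the minimum $\mathbb{P}$-weight of a nonzero codeword). $\mathcal{A}_{r,\mathbb{P}}(\mathcal{C})=|\{u\in\mathcal{C}:w_{\mathbb{P}}(u)=r\}|$.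 *)

(* Defs.v *)
From HB Require Import structures.
From mathcomp Require Import all_boot all_order all_algebra.
Set Implicit Arguments. Unset Strict Implicit. Unset Printing Implicit Defensive.
Import GRing.Theory.

(* The poset P on [n] is modelled on 'I_n (coordinates 0..n-1) by a relation le. *)
Definition is_poset (n : nat) (le : rel 'I_n) : Prop :=
  [/\ forall i, le i i,
      forall i j, le i j -> le j i -> i = j
    & forall i j k, le i j -> le j k -> le i k].

Definition is_ideal (n : nat) (le : rel 'I_n) (I : {set 'I_n}) : bool :=
  [forall j, forall i, (j \in I) && le i j ==> (i \in I)].

Definition ideals_of_size (n : nat) (le : rel 'I_n) (r : nat) : {set {set 'I_n}} :=
  [set I : {set 'I_n} | is_ideal le I & #|I| == r].

Definition maxl (n : nat) (le : rel 'I_n) (I : {set 'I_n}) : {set 'I_n} :=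
  [set j in I | [forall i in I, le j i ==> (i == j)]].

Section Weights.
Variables (F : finFieldType) (n : nat) (le : rel 'I_n).

Definition supp (u : 'rV[F]_n) : {set 'I_n} := [set i | (u ord0 i != 0%R)].

Definition wP (u : 'rV[F]_n) : nat :=
  #|[set i : 'I_n | [exists j, (j \in supp u) && le i j]]|.

(* d_1^P(C): minimum P-weight of a nonzero codeword (n.+1 if C = 0) *)
Definition d1P (C : {vspace 'rV[F]_n}) : nat :=
  \big[minn/n.+1]_(u : 'rV[F]_n | (u \in C) && (u != 0%R)) wP u.

Definition APr (C : {vspace 'rV[F]_n}) (r : nat) : nat :=
  #|[set u : 'rV[F]_n | (u \in C) && (wP u == r)]|.
End Weights.

(* Main.v *)
Require Import Defs.
From HB Require Import structures.
From mathcomp Require Import all_boot all_order all_algebra all_field zify.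
Import GRing.Theory.
Set Implicit Arguments. Unset Strict Implicit.

Section Poset.
Variables (n : nat) (le : rel 'I_n).
Hypothesis hP : is_poset le.

Definition gen (S : {set 'I_n}) := [set i | [exists j, (j \in S) && le i j]].

Lemma le_refl i : le i i. Proof. by case: hP => H _ _; apply: H. Qed.
Lemma le_anti i j : le i j -> le j i -> i = j. Proof. by case: hP => _ H _; apply: H. Qed.
Lemma le_trans i j k : le i j -> le j k -> le i k. Proof. by case: hP => _ _ H; apply: H. Qed.

Lemma idealP (I : {set 'I_n}) : reflect (forall i j, j \in I -> le i j -> i \in I) (is_ideal le I).
Proof.
apply: (iffP forallP) => [H i j jI lij | H j].
  by move/forallP: (H j) => /(_ i); rewrite jI lij.
by apply/forallP => i; apply/implyP => /andP[]; apply: H.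
Qed.

Lemma gen_ideal S : is_ideal le (gen S).
Proof.
apply/idealP => i j; rewrite !inE => /existsP[k /andP[kS ljk]] lij.
by apply/existsP; exists k; rewrite kS (le_trans lij ljk).
Qed.

Lemma sub_gen (S : {set 'I_n}) : S \subset gen S.
Proof. by apply/subsetP => i iS; rewrite inE; apply/existsP; exists i; rewrite iS le_refl. Qed.

Lemma gen_sub (S I : {set 'I_n}) : is_ideal le I -> S \subset I -> gen S \subset I.
Proof.
move=> /idealP hI /subsetP sSI; apply/subsetP => i; rewrite inE => /existsP[j /andP[jS lij]].
exact: hI (sSI _ jS) lij.
Qed.

Lemma maxlP (I : {set 'I_n}) j : reflect (j \in I /\ forall i, i \in I -> le j i -> i = j) (j \in maxl le I).
Proof.
rewrite inE; apply: (iffP andP) => [[jI /forallP H] | [jI H]]; split => //.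
  by move=> i iI lji; move/(_ i): H; rewrite iI lji => /eqP.
by apply/forallP => i; apply/implyP => iI; apply/implyP => lji; rewrite (H i iI lji).
Qed.

Lemma below_max (I : {set 'I_n}) x : x \in I -> exists2 m, m \in maxl le I & le x m.
Proof.
move=> xI.
pose up j := [set i in I | le j i].
pose cand := [pred j | (j \in I) && le x j].
have cx : cand x by rewrite /= xI le_refl.
case: (arg_minnP (fun j => #|up j|) cx) => j /andP[jI lxj] Hmin.
exists j => //; apply/maxlP; split => // i iI lji.
apply/eqP; apply/negP => /negP nij.
have ci : cand i by rewrite /= iI (le_trans lxj lji).
have := Hmin i ci.
have hsub : up i \proper up j.
  apply/properP; split.
    by apply/subsetP => k; rewrite !inE => /andP[-> lik]; rewrite (le_trans lji lik).
  exists j; first by rewrite inE jI le_refl.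
  rewrite inE jI /= ; apply/negP => lij.
  by move: nij; rewrite (le_anti lij lji) eqxx.
by rewrite leqNgt (proper_card hsub).
Qed.

Lemma gen_eq (S I : {set 'I_n}) : is_ideal le I ->
  (gen S == I) = (S \subset I) && (maxl le I \subset S).
Proof.
move=> hI; apply/eqP/andP => [<- | [sSI sMS]].
  split; first exact: sub_gen.
  apply/subsetP => m /maxlP[]; rewrite inE => /existsP[j /andP[jS lmj]] H.
  have : j \in gen S by apply: (subsetP (sub_gen S)).
  by move=> jg; rewrite -(H j jg lmj).
apply/eqP; rewrite eqEsubset gen_sub //=.
apply/subsetP => i iI; have [m mM lim] := below_max iI.
by rewrite inE; apply/existsP; exists m; rewrite (subsetP sMS _ mM) lim.
Qed.

Lemma ideal_remove (I T : {set 'I_n}) : is_ideal le I -> T \subset maxl le I -> is_ideal le (I :\: T).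
Proof.
move=> /idealP hI /subsetP sTM; apply/idealP => i j; rewrite !inE => /andP[jT jI] lij.
rewrite (hI _ _ jI lij) andbT; apply/negP => iT.
have /maxlP[_ H] := sTM _ iT.
by move: jT; rewrite (H j jI lij) iT.
Qed.

Lemma ideal_sub_size (J : {set 'I_n}) m : is_ideal le J -> m <= #|J| ->
  exists J', [/\ is_ideal le J', J' \subset J & #|J'| = m].
Proof.
move eqk : (#|J| - m) => k; elim: k J eqk => [|k IH] J eqk hJ lmJ.
  by exists J; split => //; apply/eqP; rewrite eqn_leq lmJ -subn_eq0 eqk.
have /set0Pn[x xJ] : J != set0 by rewrite -card_gt0; move: eqk lmJ; case: #|J| => //; case: m.
have [y yM _] := below_max xJ.
have sy : [set y] \subset maxl le J by rewrite sub1set.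
have hJ' := ideal_remove hJ sy.
have yJ : y \in J by case/maxlP: yM.
have cJ : #|J :\: [set y]| = #|J|.-1 by rewrite [in RHS](cardsD1 y J) yJ.
have [J' [h1 h2 h3]] := IH (J :\: [set y]) ltac:(rewrite cJ; lia) hJ' ltac:(rewrite cJ; lia).
exists J'; split => //; apply: subset_trans h2 _; exact: subsetDl.
Qed.
End Poset.
Section Z.
Variable (F : finFieldType) (n : nat).
Definition Zset (A : {set 'I_n}) := [set v : 'rV[F]_n | [forall i in A, v ord0 i == 0%R]].
Lemma card_Zset A : #|Zset A| = #|F| ^ (n - #|A|).
Proof.
pose g (v : 'rV[F]_n) := [ffun i => v ord0 i].
have ginj : injective g.
  by move=> u v /ffunP H; apply/rowP => i; have := H i; rewrite !ffunE.
rewrite -(card_imset _ ginj).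
have -> : n - #|A| = #|~: A| by have := cardsC A; rewrite card_ord; lia.
rewrite -(card_pffun_on 0%R (~: A) (predT : {pred F})).
apply: eq_card => f; apply/imsetP/pffun_onP => [[v] | [H _]].
  rewrite inE => /forallP Hv ->; split => // ; apply/subsetP => i; rewrite !inE ffunE.
  by apply: contraR => /negbNE iA; move/(_ i): Hv; rewrite iA.
exists (\row_i f i)%R; last by apply/ffunP => i; rewrite !ffunE mxE.
rewrite inE; apply/forallP => i; apply/implyP => iA; rewrite mxE.
apply: contraLR iA => fi; have := subsetP H i; rewrite !inE; apply; exact: fi.
Qed.
End Z.

Lemma bigmin_leq (T : finType) (P : pred T) (f : T -> nat) x j : P j -> \big[minn/x]_(i | P i) f i <= f j.
Proof.
move=> Pj; rewrite -big_filter.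
have : j \in filter P (index_enum T) by rewrite mem_filter Pj mem_index_enum.
elim: (filter _ _) => [|a s IH] //=; rewrite big_cons inE => /orP[/eqP<-|/IH h].
  by rewrite geq_min leqnn.
by rewrite geq_min h orbT.
Qed.

Section Code.
Variables (F : finFieldType) (n : nat) (le : rel 'I_n) (C : {vspace 'rV[F]_n}).
Hypothesis hP : is_poset le.
Hypothesis hd : d1P le C = n - \dim C + 1.

Definition CJ (J : {set 'I_n}) := [set u : 'rV[F]_n | (u \in C) && (supp u \subset J)].

Lemma dimC : \dim C <= n.
Proof. by have := dimvS (subvf C); rewrite dimvf /dim /= mul1n. Qed.

Lemma wP_ge (u : 'rV[F]_n) : u \in C -> u != 0%R -> d1P le C <= wP le u.
Proof. by move=> uC u0; apply: bigmin_leq; rewrite uC. Qed.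

Lemma wP_le (u : 'rV[F]_n) (J : {set 'I_n}) : is_ideal le J -> supp u \subset J -> wP le u <= #|J|.
Proof. by move=> hJ sJ; apply: subset_leq_card; apply: (gen_sub hJ sJ). Qed.

Lemma CJ_small (J : {set 'I_n}) : is_ideal le J -> #|J| < d1P le C -> CJ J = [set 0%R].
Proof.
move=> hJ small; apply/setP => u; rewrite !inE; apply/andP/eqP => [[uC sJ]|->].
  apply/eqP; apply: contraTT small => u0; rewrite -leqNgt.
  exact: leq_trans (wP_ge uC u0) (wP_le hJ sJ).
split; first exact: mem0v.
by apply/subsetP => i; rewrite inE mxE eqxx.
Qed.

Lemma card_C : #|[set u : 'rV[F]_n | u \in C]| = #|F| ^ \dim C.
Proof. by rewrite -card_vspace; apply: eq_card => u; rewrite inE. Qed.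

Lemma card_CJ (J : {set 'I_n}) : is_ideal le J ->
  #|CJ J| = #|F| ^ (#|J| - (d1P le C - 1)).
Proof.
move=> hJ; have dC := dimC.
case: (ltnP #|J| (d1P le C)) => hJd.
  rewrite CJ_small // cards1; have -> : #|J| - (d1P le C - 1) = 0 by lia.
  by rewrite expn0.
have [J' [hJ' sJ' cJ']] := ideal_sub_size hP hJ (leq_trans (leq_subr 1 _) hJd).
have CJ'0 : CJ J' = [set 0%R] by apply: CJ_small => //; rewrite cJ' hd; lia.
pose res (u : 'rV[F]_n) : 'rV[F]_n := (\row_i (if i \in J' then 0 else u ord0 i))%R.
have resinj : {in [set u : 'rV[F]_n | u \in C] &, injective res}.
  move=> u v; rewrite !inE => uC vC ruv.
  have : (u - v)%R \in CJ J'.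
    rewrite inE rpredB //=; apply/subsetP => i; rewrite inE mxE.
    apply: contraR => iJ'; have := congr1 (fun w : 'rV[F]_n => w ord0 i) ruv.
    by rewrite /res !mxE (negbTE iJ') => ->; rewrite subrr.
  by rewrite CJ'0 inE subr_eq0 => /eqP.
have imres : res @: [set u : 'rV[F]_n | u \in C] = Zset F J'.
  apply/eqP; rewrite eqEcard; apply/andP; split.
    apply/subsetP => _ /imsetP[u _ ->]; rewrite inE; apply/forallP => i.
    by apply/implyP => iJ'; rewrite mxE iJ'.
  rewrite card_Zset (card_in_imset resinj) card_C cJ' hd.
  by have -> : n - (n - \dim C + 1 - 1) = \dim C by lia.
have key u : (supp u \subset J) = (res u \in Zset F (J' :|: ~: J)).
  apply/subsetP/idP => [H | ].
    rewrite inE; apply/forallP => i; apply/implyP; rewrite !inE mxE.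
    case: ifP => // iJ' /= iJ; apply: contraR iJ => ui; apply: H; rewrite inE.
    exact: ui.
  rewrite inE => /forallP H i; rewrite inE => ui; apply: contraR ui => iJ.
  move/implyP: (H i); rewrite !inE iJ orbT mxE => /(_ isT).
  case: ifP => // iJ'; by move: iJ; rewrite (subsetP sJ' _ iJ').
have subCJ : CJ J \subset [set u : 'rV[F]_n | u \in C].
  by apply/subsetP => u; rewrite !inE => /andP[].
rewrite -(card_in_imset (sub_in2 (subsetP subCJ) resinj)).
have -> : res @: CJ J = Zset F (J' :|: ~: J).
  apply/setP => v; apply/imsetP/idP => [[u] | vZ].
    by rewrite inE => /andP[_]; rewrite key => H ->.
  have : v \in res @: [set u : 'rV[F]_n | u \in C].
    rewrite imres; move: vZ; rewrite !inE => /forallP H; apply/forallP => i.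
    by apply/implyP => iJ'; move/implyP: (H i); rewrite !inE iJ'; apply.
  case/imsetP => u; rewrite inE => uC vu; exists u => //.
  by rewrite inE uC key -vu.
rewrite card_Zset.
have cI : J' :&: ~: J = set0.
  apply/setP => i; rewrite !inE; case: (boolP (i \in J')) => //= iJ'.
  by rewrite (subsetP sJ' _ iJ').
have cU := cardsU J' (~: J); have cC := cardsC J; rewrite card_ord in cC.
rewrite cI cards0 subn0 in cU; rewrite cU cJ'; congr (_ ^ _); lia.
Qed.
End Code.


Local Open Scope ring_scope.

Lemma prod_bool (I : finType) (S : {pred I}) (c : I -> bool) :
  \prod_(t in S) ((c t)%:R : int) = ([forall t in S, c t])%:R.
Proof.
case: (boolP [forall t in S, c t]) => [/forall_inP H | /forall_inPn [t tS ct]].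
  by apply: big1 => t /H ->.
by rewrite (bigD1 t) //= (negbTE ct) mul0r.
Qed.

Lemma prod1D (I : finType) (M : {set I}) (a : I -> int) :
  \prod_(t in M) (1 + a t) = \sum_(S in powerset M) \prod_(t in S) a t.
Proof.
rewrite big_mkcond /=.
transitivity (\prod_t ((if t \in M then a t else 0) + 1)).
  by apply: eq_bigr => t _; case: ifP => _; rewrite ?add0r // addrC.
rewrite bigA_distr (bigID (fun J : {set I} => J \subset M)) /=.
rewrite [X in _ + X]big1 ?addr0; last first.
  move=> J /subsetPn [t tJ tM].
  by rewrite (bigD1 t) //= tJ (negbTE tM) mul0r.
apply: eq_big => [J | J sJM]; first by rewrite powersetE.
rewrite [RHS]big_mkcond; apply: eq_bigr => t _.
by case: ifP => // tJ; rewrite (subsetP sJM _ tJ).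
Qed.

Lemma card_sum (T : finType) (A : {set T}) (Q : pred T) :
  (#|[set x in A | Q x]|)%:R = \sum_(x in A) ((Q x)%:R : int).
Proof.
rewrite -sum1_card natr_sum [LHS]big_mkcond [RHS]big_mkcond; apply: eq_bigr => x _.
by rewrite !inE; case: (x \in A); case: (Q x).
Qed.

Lemma incl_excl (T I : finType) (A : {set T}) (M : {set I}) (b : I -> T -> bool) :
  (#|[set x in A | [forall t in M, ~~ b t x]]|)%:R =
  \sum_(S in powerset M) (-1) ^+ #|S| * ((#|[set x in A | [forall t in S, b t x]]|)%:R : int).
Proof.
have E x : ([forall t in M, ~~ b t x])%:R = \sum_(S in powerset M) \prod_(t in S) (- (b t x)%:R : int).
  rewrite -prod_bool -prod1D; apply: eq_bigr => t _.
  by case: (b t x) => /=; rewrite ?subrr ?oppr0 ?addr0.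
rewrite card_sum; under eq_bigr => x _ do rewrite E.
rewrite exchange_big /=; apply: eq_bigr => S _.
rewrite card_sum mulr_sumr; apply: eq_bigr => x _.
by rewrite prodrN prod_bool.
Qed.

Lemma sum_powerset_size (I : finType) (M : {set I}) (f : nat -> int) :
  \sum_(S in powerset M) f #|S| = \sum_(s < #|M|.+1) f s *+ 'C(#|M|, s).
Proof.
rewrite (partition_big (fun S : {set I} => (inord #|S| : 'I_(#|M|.+1))) xpredT) //=.
apply: eq_bigr => s _.
have hS S : S \in powerset M -> (inord #|S| == s :> 'I_(#|M|.+1)) = (#|S| == s).
  rewrite powersetE => SM; have lt : (#|S| < #|M|.+1)%N by rewrite ltnS subset_leq_card.
  apply/eqP/eqP => [H | H]; last by apply/val_inj; rewrite /= inordK // H.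
  by rewrite -H inordK.
transitivity (\sum_(S in [set S : {set I} | S \subset M & #|S| == s]) f s); last first.
  by rewrite sumr_const cards_draws.
apply: eq_big => [S | S /andP[SM]].
  rewrite !inE; case SM: (S \in powerset M); first by rewrite hS // -powersetE SM.
  by move: SM; rewrite powersetE => ->.
by rewrite hS // => /eqP ->.
Qed.

Lemma sum_widen (h : nat -> int) a b : (a <= b)%N -> (forall s, (a <= s < b)%N -> h s = 0) ->
  \sum_(s < a) h s = \sum_(s < b) h s.
Proof.
move=> ab H; rewrite -!(big_mkord xpredT) (big_cat_nat (n:=a) (leq0n a) ab) /=.
rewrite [X in _ + X]big1_seq ?addr0 // => s /andP[_]; rewrite mem_index_iota; exact: H.
Qed.

Lemma final (m N q : nat) : (0 < m)%N -> (0 < q)%N ->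
  \sum_(s < m.+1) (-1) ^+ s * (q ^ (N.+1 - s))%:Z * ('C(m, s))%:Z =
  \sum_(s < N.+1) (-1) ^+ s * ('C(m, s))%:Z * ((q ^ (N + 1 - s) - 1)%N)%:Z.
Proof.
move=> m0 q0.
have alt : \sum_(s < m.+1) ((-1) ^+ s : int) * ('C(m, s))%:Z = 0.
  transitivity ((1 - 1 : int) ^+ m); last by rewrite subrr expr0n eqn0Ngt m0.
  by rewrite exprBn; apply: eq_bigr => s _; rewrite !expr1n !mulr1 -mulr_natr natz.
pose h s : int := (-1) ^+ s * ('C(m, s))%:Z * ((q ^ (N + 1 - s) - 1)%N)%:Z.
transitivity (\sum_(s < m.+1) h s).
  transitivity (\sum_(s < m.+1) (h s + (-1) ^+ s * ('C(m, s))%:Z)); last by rewrite big_split /= alt addr0.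
  apply: eq_bigr => s _; rewrite /h -subzn ?expn_gt0 ?q0 // addn1.
  rewrite mulrBr ((fun x => mulr1 x) : forall x : int, x * 1%Z = x) subrK.
  by rewrite -!mulrA; congr (_ * _); rewrite mulrC.
have w1 := @sum_widen h m.+1 (m.+1 + N.+1) (leq_addr _ _).
have w2 := @sum_widen h N.+1 (m.+1 + N.+1) (leq_addl _ _).
transitivity (\sum_(s < m.+1 + N.+1) h s); last apply/esym/w2; first apply: w1.
  by move=> s /andP[ms _]; rewrite /h bin_small // mulr0 mul0r.
move=> s /andP[Ns _]; rewrite /h.
have e : (N + 1 - s = 0)%N by lia.
by rewrite e expn0 subnn mulr0.
Qed.

Lemma supp_sub_diff (F : finFieldType) (n : nat) (u : 'rV[F]_n) (I S : {set 'I_n}) :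
  (supp u \subset I :\: S) = (supp u \subset I) && [forall t in S, u ord0 t == 0].
Proof.
apply/subsetP/andP => [H | [/subsetP H1 /forall_inP H2] i iu].
  split; first by apply/subsetP => i /H; rewrite inE => /andP[].
  apply/forall_inP => t tS; case: (eqVneq (u ord0 t) 0) => // ut.
  have : t \in supp u by rewrite inE ut.
  by move/H; rewrite inE tS.
rewrite inE (H1 _ iu) andbT; apply: contraL iu => /H2 /eqP ut.
by rewrite inE ut eqxx.
Qed.

Unset Implicit Arguments.
Theorem theorem4 (F : finFieldType) (n : nat) (le : rel 'I_n)
    (C : {vspace 'rV[F]_n}) (r : nat) :
  is_poset le ->
  d1P le C = (n - \dim C + 1)%N ->
  (d1P le C <= r)%N -> (r <= n)%N ->
  ((APr le C r)%:Z : int) =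
    \sum_(I in ideals_of_size le r)
      \sum_(s < (r - d1P le C).+1)
        (-1) ^+ s * ('C(#|maxl le I|, s))%:Z
          * ((#|F| ^ (r - d1P le C + 1 - s) - 1)%N)%:Z.
Proof.
move=> hP hd hdr hrn.
set d := d1P le C in hd hdr *.
have dC := dimC C.
have d1 : (1 <= d)%N by rewrite hd; lia.
have q0 : (0 < #|F|)%N by apply/card_gt0P; exists 0%R.
have stepA : APr le C r = (\sum_(I in ideals_of_size le r)
    #|[set u : 'rV[F]_n | (u \in C) && (gen le (supp u) == I)]|)%N.
  rewrite /APr -sum1_card (partition_big (fun u : 'rV[F]_n => gen le (supp u))
     (fun I => I \in ideals_of_size le r)) /=; last first.
    by move=> u; rewrite !inE gen_ideal //= => /andP[_].
  apply: eq_bigr => I; rewrite inE => /andP[_ /eqP cI].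
  rewrite -sum1_card; apply: eq_bigl => u; rewrite !inE.
  case: (u \in C) => //=; case: (boolP (gen le (supp u) == I)) => [/eqP gI | _]; last by rewrite andbF.
  by rewrite andbT; apply/eqP; rewrite -cI -gI.
rewrite stepA (big_morph Posz PoszD (erefl 0%Z)); apply: eq_bigr => I.
rewrite inE => /andP[hI /eqP cI].
have stepB : #|[set u : 'rV[F]_n | (u \in C) && (gen le (supp u) == I)]| =
   #|[set u in CJ C I | [forall t in maxl le I, ~~ (u ord0 t == 0)]]|.
  apply: eq_card => u; rewrite !inE gen_eq // -andbA; congr (_ && (_ && _)).
  apply/subsetP/forall_inP => H t tM; first by have := H t tM; rewrite inE.
  by rewrite inE; exact: H.
rewrite stepB -natz incl_excl.
have MI : maxl le I \subset I by apply/subsetP => t /maxlP[].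
have stepC S : S \in powerset (maxl le I) ->
  #|[set x in CJ C I | [forall t in S, x ord0 t == 0]]| = (#|F| ^ ((r - d).+1 - #|S|))%N.
  rewrite powersetE => SM; have SI := subset_trans SM MI.
  have -> : [set x in CJ C I | [forall t in S, x ord0 t == 0]] = CJ C (I :\: S).
    by apply/setP => u; rewrite !inE supp_sub_diff andbA.
  rewrite (card_CJ hP hd (ideal_remove hI SM)) cardsD (setIidPr SI) cI.
  by congr (expn _ _); lia.
under eq_bigr => S hS do rewrite stepC // natz.
rewrite (sum_powerset_size (maxl le I) (fun s => (-1) ^+ s * ((#|F| ^ ((r - d).+1 - s))%N : int))).
have m0 : (0 < #|maxl le I|)%N.
  have /set0Pn [x xI] : I != set0 by rewrite -card_gt0 cI; lia.
  have [y yM _] := below_max hP xI; apply/card_gt0P; by exists y.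
rewrite -(final (r - d) m0 q0); apply: eq_bigr => s _.
by rewrite -mulr_natr natz.
Qed.
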